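(* Assume (OP). Then for every $A\subseteq P$, $\operatorname{dcl}_{\mathcal L(P)}(A)=\operatorname{dcl}(A)$.
   Context: Let $\mathcal M=\langle M,<,+,0,\dots\rangle$ be an o-minimal expansion of an ordered group with a distinguished positive element $1$, in a language $\mathcal L$; $\operatorname{dcl}$ denotes definable closure in $\mathcal M$, and ''$\mathcal L_A$-definable'' means definable in $\mathcal M$ with parameters from $A$. Fix $P\subseteq M$ and let $\widetilde{\mathcal M}=\langle\mathcal M,P\rangle$, in the language $\mathcal L(P)$ obtained by adding a unary predicate for $P$; $\operatorname{dcl}_{\mathcal L(P)}$ is definable closure in $\widetilde{\mathcal M}$, and ''$A$-definable'' means definable in $\widetilde{\mathcal M}$ with parameters from $A$. A set $A$ is $\operatorname{dcl}$-independent over $P$ if no $a\in A$ lies in $\operatorname{dcl}((A\setminus\{a\})\cup P)$. $M^n$ has the product order topology. (OP): for every $A\subseteq M$ with $A\setminus P$ $\operatorname{dcl}$-independent over $P$ and every $A$-definable $V\subseteq M^n$, the topological closure $\overline V$ is $\mathcal L_A$-definable. *)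

(* Defs.v *)
From mathcomp Require Import all_boot.
Set Implicit Arguments. Unset Strict Implicit. Unset Printing Implicit Defensive.

Record language := Language {
  fsym : Type; farity : fsym -> nat;
  rsym : Type; rarity : rsym -> nat }.

Record structure (L : language) := Structure {
  carrier :> Type;
  finterp : forall f : fsym L, ('I_(farity f) -> carrier) -> carrier;
  rinterp : forall r : rsym L, ('I_(rarity r) -> carrier) -> Prop }.

(** Terms and formulas, variables as de Bruijn indices (nat). *)
Inductive term (L : language) : Type :=
  | Var : nat -> term L
  | App : forall f : fsym L, ('I_(farity f) -> term L) -> term L.

Inductive formula (L : language) : Type :=
  | FEq  : term L -> term L -> formula L
  | FRel : forall r : rsym L, ('I_(rarity r) -> term L) -> formula L
  | FNot : formula L -> formula L
  | FAnd : formula L -> formula L -> formula L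
  | FEx  : formula L -> formula L.   (* binds variable 0 *)

Section Semantics.
Variables (L : language) (M : structure L).

Fixpoint teval (e : nat -> M) (t : term L) : M :=
  match t with
  | Var k => e k
  | App f ts => @finterp L M f (fun i => teval e (ts i))
  end.

Definition scons (y : M) (e : nat -> M) : nat -> M :=
  fun k => match k with 0 => y | k'.+1 => e k' end.

Fixpoint sat (e : nat -> M) (phi : formula L) : Prop :=
  match phi with
  | FEq t1 t2 => teval e t1 = teval e t2
  | FRel r ts => @rinterp L M r (fun i => teval e (ts i))
  | FNot p => ~ sat e p
  | FAnd p q => sat e p /\ sat e q
  | FEx p => exists y : M, sat (scons y e) p
  end.

End Semantics.

Fixpoint tvars_lt (L : language) (k : nat) (t : term L) : Prop :=
  match t with
  | Var i => (i < k)%N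
  | App f ts => forall i, tvars_lt k (ts i)
  end.

Fixpoint fvars_lt (L : language) (k : nat) (phi : formula L) : Prop :=
  match phi with
  | FEq t1 t2 => tvars_lt k t1 /\ tvars_lt k t2
  | FRel r ts => forall i, tvars_lt k (ts i)
  | FNot p => fvars_lt k p
  | FAnd p q => fvars_lt k p /\ fvars_lt k q
  | FEx p => fvars_lt k.+1 p
  end.

(** [definable M A n V]: V ⊆ M^n is definable in M with parameters from A:
    V = { x | M ⊨ phi(x_0..x_{n-1}, a_0..a_{m-1}) } with a_j ∈ A,
    where the variables of phi are among 0..n+m-1 (x first, then a). *)
Definition definable (L : language) (M : structure L) (A : M -> Prop)
    (n : nat) (V : ('I_n -> M) -> Prop) : Prop :=
  exists (phi : formula L) (m : nat) (a : 'I_m -> M),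
    fvars_lt (n + m) phi /\ (forall j, A (a j)) /\
    forall x : 'I_n -> M,
      V x <-> (forall e : nat -> M,
                 (forall i : 'I_n, e i = x i) ->
                 (forall j : 'I_m, e (n + j)%N = a j) -> sat e phi).

Definition dcl (L : language) (M : structure L) (A : M -> Prop) : M -> Prop :=
  fun b => definable A (fun x : 'I_1 -> M => x ord0 = b).

Definition langP (L : language) : language :=
  {| fsym := fsym L; farity := @farity L;
     rsym := option (rsym L);
     rarity := fun r => match r with Some r' => rarity r' | None => 1%N end |}.

Definition expandP (L : language) (M : structure L) (P : M -> Prop)
  : structure (langP L) :=
  @Structure (langP L) M
     (@finterp L M)
     (fun r : option (rsym L) =>
       match r as s return ('I_(@rarity (langP L) s) -> M) -> Prop with
       | Some r' => @rinterp L M r'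
       | None => fun v => P (v ord0)
       end).

Record ogroup_expansion (L : language) (M : structure L) := OGExp {
  lt_sym : rsym L; add_sym : fsym L; zero_sym : fsym L; one_sym : fsym L;
  lt_arity : rarity lt_sym = 2%N;
  add_arity : farity add_sym = 2%N;
  zero_arity : farity zero_sym = 0%N;
  one_arity : farity one_sym = 0%N;
  ltM : M -> M -> Prop; addM : M -> M -> M; zeroM : M; oneM : M;
  lt_interp : forall (v : 'I_(rarity lt_sym) -> M) (i j : 'I_(rarity lt_sym)),
      val i = 0%N -> val j = 1%N -> (@rinterp L M lt_sym v <-> ltM (v i) (v j));
  add_interp : forall (v : 'I_(farity add_sym) -> M) (i j : 'I_(farity add_sym)),
      val i = 0%N -> val j = 1%N -> @finterp L M add_sym v = addM (v i) (v j);
  zero_interp : forall v : 'I_(farity zero_sym) -> M, @finterp L M zero_sym v = zeroM;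
  one_interp : forall v : 'I_(farity one_sym) -> M, @finterp L M one_sym v = oneM;
  lt_irrefl : forall x, ~ ltM x x;
  lt_trans : forall x y z, ltM x y -> ltM y z -> ltM x z;
  lt_total : forall x y, ltM x y \/ x = y \/ ltM y x;
  addA : forall x y z, addM x (addM y z) = addM (addM x y) z;
  add0M : forall x, addM zeroM x = x;
  addM0 : forall x, addM x zeroM = x;
  addInv : forall x, exists y, addM x y = zeroM /\ addM y x = zeroM;
  lt_addl : forall x y z, ltM x y -> ltM (addM z x) (addM z y);
  lt_addr : forall x y z, ltM x y -> ltM (addM x z) (addM y z);
  zero_lt_one : ltM zeroM oneM }.

(** O-minimality: every definable (with arbitrary parameters) subset of M is a
    finite union of points and open intervals with endpoints in M ∪ {±∞}. *)
Definition o_minimal (L : language) (M : structure L) (G : ogroup_expansion M)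
  : Prop :=
  forall X : M -> Prop,
    definable (fun _ => True) (fun x : 'I_1 -> M => X (x ord0)) ->
    exists (k : nat) (pts : 'I_k -> M) (l : nat)
           (ivs : 'I_l -> option M * option M),
      forall x, X x <->
        ((exists i, x = pts i) \/
         exists j, let ab := ivs j in
           (match ab.1 with Some a => ltM G a x | None => True end) /\
           (match ab.2 with Some b => ltM G x b | None => True end)).

(** Topological closure in M^n, product of the order topology
    (M has no endpoints, so boxes of open intervals form a base). *)
Definition closure (L : language) (M : structure L) (G : ogroup_expansion M)
  (n : nat) (V : ('I_n -> M) -> Prop) : ('I_n -> M) -> Prop :=
  fun x => forall lo hi : 'I_n -> M,
    (forall i, ltM G (lo i) (x i) /\ ltM G (x i) (hi i)) ->
    exists y, V y /\ forall i, ltM G (lo i) (y i) /\ ltM G (y i) (hi i).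

Definition dcl_indep_over (L : language) (M : structure L) (B P : M -> Prop)
  : Prop :=
  forall b, B b -> ~ dcl (fun y => (B y /\ y <> b) \/ P y) b.

Definition OP (L : language) (M : structure L) (G : ogroup_expansion M)
  (P : M -> Prop) : Prop :=
  forall A : M -> Prop,
    dcl_indep_over (fun y => A y /\ ~ P y) P ->
    forall (n : nat) (V : ('I_n -> M) -> Prop),
      @definable (langP L) (expandP P) A n V ->
      definable A (closure G V).

(* Main.v *)
Require Import Defs.
From mathcomp Require Import all_boot.
From Stdlib Require FunctionalExtensionality.
From Stdlib Require Import Setoid.

Section Tr.
Variable L : language.

Fixpoint trt (t : term L) : term (langP L) :=
  match t with
  | Var k => Var (langP L) k
  | App f ts => @App (langP L) f (fun i => trt (ts i))
  end.

Fixpoint trf (phi : formula L) : formula (langP L) :=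
  match phi with
  | FEq t1 t2 => FEq (trt t1) (trt t2)
  | FRel r ts => @FRel (langP L) (Some r) (fun i => trt (ts i))
  | FNot p => FNot (trf p)
  | FAnd p q => FAnd (trf p) (trf q)
  | FEx p => FEx (trf p)
  end.

Variables (M : structure L) (P : M -> Prop).

Lemma trt_eval (e : nat -> M) t : @teval _ (expandP P) e (trt t) = teval e t.
Proof.
elim: t => [k|f ts IH] //=.
f_equal; apply: FunctionalExtensionality.functional_extensionality => i; exact: IH.
Qed.

Lemma trt_vars k t : tvars_lt k t -> tvars_lt k (trt t).
Proof. elim: t => [i|f ts IH] //= H i; exact: IH. Qed.

Lemma trf_sat phi : forall (e : nat -> M), @sat _ (expandP P) e (trf phi) <-> sat e phi.
Proof.
elim: phi => [t1 t2|r ts|p IH|p IHp q IHq|p IH] e /=.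
- by rewrite !trt_eval.
- have -> : (fun i => @teval _ (expandP P) e (trt (ts i))) = (fun i => teval e (ts i)).
    by apply: FunctionalExtensionality.functional_extensionality => i; rewrite trt_eval.
  by [].
- by split=> H1 H2; apply: H1; apply/IH.
- by split=> [[/IHp ? /IHq ?]|[/IHp ? /IHq ?]].
- split=> [[y Hy]|[y Hy]]; exists y; apply/IH; exact Hy.
Qed.

Lemma trf_vars phi : forall k, fvars_lt k phi -> fvars_lt k (trf phi).
Proof.
elim: phi => [t1 t2|r ts|p IH|p IHp q IHq|p IH] k /=.
- by case=> *; split; apply: trt_vars.
- by move=> H i; apply: trt_vars.
- exact: IH.
- by case=> *; split; [apply: IHp|apply: IHq].
- exact: IH.
Qed.
End Tr.

Theorem fact3p1 (L : language) (M : structure L) (G : ogroup_expansion M)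
  (P : M -> Prop) :
  o_minimal G -> OP G P ->
  forall A : M -> Prop, (forall a, A a -> P a) ->
    forall b : M, @dcl (langP L) (expandP P) A b <-> dcl A b.
Proof.
move=> _ HOP A HA b; split.
- move=> Hd.
  have Hind : dcl_indep_over (fun y => A y /\ ~ P y) P.
    by move=> y [Ay nPy]; case: (nPy (HA _ Ay)).
  have [phi [m [a [Hv [Ha Hx]]]]] := HOP A Hind 1%N _ Hd.
  exists phi, m, a; split => //; split => // x.
  rewrite -Hx; split.
  + move=> <- lo hi Hb; exists x; split => //.
  + move=> Hc; case: (lt_total G (x ord0) b) => [Hlt|[//|Hgt]].
    *
      have [y [Hy1 Hy2]] := addInv G (oneM G).
      have yneg : ltM G y (zeroM G).
        case: (lt_total G y (zeroM G)) => [//|[Hy|Hy]].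
        - move: Hy1; rewrite Hy addM0 => H1.
          by have := zero_lt_one G; rewrite H1 => /lt_irrefl.
        - have := lt_addl (oneM G) Hy; rewrite Hy1 addM0 => H.
          by have := lt_trans (zero_lt_one G) H => /lt_irrefl.
      have Hlo : ltM G (addM G (x ord0) y) (x ord0).
        by have := lt_addl (x ord0) yneg; rewrite addM0.
      have [z [Hz Hzi]] := Hc (fun _ => addM G (x ord0) y) (fun _ => b)
        (fun i => conj (eq_rect _ (fun k => ltM G _ (x k)) Hlo _ (esym (ord1 i)))
                       (eq_rect _ (fun k => ltM G (x k) b) Hlt _ (esym (ord1 i)))).
      have [_ H] := Hzi ord0; rewrite Hz in H; case: (lt_irrefl H).
    * have Hhi : ltM G (x ord0) (addM G (x ord0) (oneM G)).
        by have := lt_addl (x ord0) (zero_lt_one G); rewrite addM0.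
      have [z [Hz Hzi]] := Hc (fun _ => b) (fun _ => addM G (x ord0) (oneM G))
        (fun i => conj (eq_rect _ (fun k => ltM G b (x k)) Hgt _ (esym (ord1 i)))
                       (eq_rect _ (fun k => ltM G (x k) _) Hhi _ (esym (ord1 i)))).
      have [H _] := Hzi ord0; rewrite Hz in H; case: (lt_irrefl H).
- move=> [phi [m [a [Hv [Ha Hx]]]]].
  exists (@trf L phi), m, a; split; first exact: trf_vars.
  split => // x; rewrite Hx; split => H e He1 He2.
  + by apply/(@trf_sat L M P); apply: H.
  + by apply/(@trf_sat L M P); apply: H.
Qed.
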